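(* Let $p,q,r\in(0,1/36)$, $h=8/15$, $a=3/15$, and let $\mathcal S_{pqr}=\{S_1,\dots,S_6\}$ be given by $S_1(x)=px$, $S_2(x)=a+rx$, $S_3(x)=h-qx$, $S_4(x)=h-r+rx$, $S_5(x)=1-a-rx$, $S_6(x)=1-r+rx$. If $\frac{\log p}{\log r}\notin\mathbb{Q}$, then $\mathcal S_{pqr}$ does not have the weak separation property, for every such $q$.
   Context: For a system $\mathcal S=\{S_1,\dots,S_m\}$ of similarities, let $F=\{S_{j_1}\circ\cdots\circ S_{j_n}: n\ge1, j_k\in\{1,\dots,m\}\}$ be the generated semigroup and $\mathcal F=\{g^{-1}\circ f: f,g\in F\}$ the associated family of similarities. $\mathcal S$ has the weak separation property (WSP) if $\mathrm{Id}$ is not a limit point of $\mathcal F\setminus\{\mathrm{Id}\}$, i.e. $\mathrm{Id}\notin\overline{\mathcal F\setminus\{\mathrm{Id}\}}$ (for similarities $x\mapsto \lambda x+b$ of $\mathbb{R}$, convergence means convergence of the coefficients $\lambda,b$). *)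

(* Defs.v *)
From Stdlib Require Import Reals List QArith.
Open Scope R_scope.

Definition sim := (R * R)%type.
Definition sim_apply (s : sim) (x : R) : R := fst s * x + snd s.
Definition sim_comp (s t : sim) : sim := (fst s * fst t, fst s * snd t + snd s).
(* inverse (for lam <> 0) *)
Definition sim_inv (s : sim) : sim := (/ fst s, - snd s / fst s).
Definition sim_id : sim := (1, 0).

Inductive in_semigroup (S : list sim) : sim -> Prop :=
| sg_base : forall s, In s S -> in_semigroup S s
| sg_step : forall s t, In s S -> in_semigroup S t -> in_semigroup S (sim_comp s t).

Definition in_family (S : list sim) (phi : sim) : Prop :=
  exists f g, in_semigroup S f /\ in_semigroup S g /\ phi = sim_comp (sim_inv g) f.

(* Id is a limit point of script F \ {Id} (convergence of coefficients) *)
Definition id_limit_point (S : list sim) : Prop :=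
  forall eps, 0 < eps -> exists phi, in_family S phi /\ phi <> sim_id /\
    Rabs (fst phi - 1) < eps /\ Rabs (snd phi) < eps.

Definition WSP (S : list sim) : Prop := ~ id_limit_point S.

Definition h_const : R := 8 / 15.
Definition a_const : R := 3 / 15.

Definition S_pqr (p q r : R) : list sim :=
  (p, 0) :: (r, a_const) :: (- q, h_const) :: (r, h_const - r)
  :: (- r, 1 - a_const) :: (r, 1 - r) :: nil.

(* Main.v *)
Require Import Defs.
From Stdlib Require Import Reals QArith Lra Lia ZArith Classical List.
Open Scope R_scope.

Lemma INR_to_nat_ge (z : Z) : IZR z <= INR (Z.to_nat z).
Proof.
  destruct (Z_le_dec 0 z) as [H|H].
  - rewrite INR_IZR_INZ, Z2Nat.id by exact H. lra.
  - replace (Z.to_nat z) with 0%nat by lia. simpl. apply IZR_le. lia.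
Qed.

Lemma arch_nat (A c : R) : 0 < A -> exists K : nat, c < INR K * A.
Proof.
  intros HA. exists (Z.to_nat (up (c / A))).
  destruct (archimed (c / A)) as [H1 _].
  pose proof (INR_to_nat_ge (up (c/A))).
  assert (c = (c / A) * A) by (field; lra).
  assert (c / A < INR (Z.to_nat (up (c / A)))) by lra.
  rewrite H0 at 1. apply Rmult_lt_compat_r; lra.
Qed.

Lemma crossing (v0 e : R) : 0 < e -> v0 < 0 -> exists j : nat, 0 < v0 + INR j * e <= e.
Proof.
  intros He Hv. set (x := - v0 / e).
  assert (Hx : x * e = - v0) by (unfold x; field; lra).
  assert (x > 0) by (unfold x; apply Rdiv_lt_0_compat; lra).
  destruct (archimed x) as [H1 H2].
  assert (0 <= up x)%Z by (apply le_IZR; lra).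
  exists (Z.to_nat (up x)).
  rewrite INR_IZR_INZ, Z2Nat.id by exact H0.
  split.
  - assert (x * e < IZR (up x) * e) by (apply Rmult_lt_compat_r; lra). lra.
  - assert (IZR (up x) * e <= (x + 1) * e) by (apply Rmult_le_compat_r; lra). lra.
Qed.

Lemma small_elem (A B : R) : 0 < A -> 0 < B ->
  (forall n m : nat, INR n * B - INR m * A = 0 -> n = 0%nat /\ m = 0%nat) ->
  forall d, 0 < d -> exists n m : nat, 0 < Rabs (INR n * B - INR m * A) < d.
Proof.
  intros HA HB Hirr d Hd.
  apply NNPP. intro Hno.
  assert (H : forall n m : nat, INR n * B - INR m * A <> 0 -> d <= Rabs (INR n * B - INR m * A)).
  { intros n m Hnz. apply Rnot_lt_le. intro Hlt. apply Hno. exists n, m. split; [|exact Hlt].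
    apply Rabs_pos_lt. exact Hnz. }
  assert (Claim : forall K : nat, exists n1 m1 n2 m2 : nat,
    d <= INR n1 * B - INR m1 * A /\ d <= INR m2 * A - INR n2 * B /\
    (INR n1 * B - INR m1 * A) + (INR m2 * A - INR n2 * B) <= A + B - INR K * d).
  { induction K as [|K IH].
    - exists 1%nat, 0%nat, 0%nat, 1%nat. simpl.
      pose proof (H 1%nat 0%nat) as H1. pose proof (H 0%nat 1%nat) as H2. simpl in H1, H2.
      replace (1 * B - 0 * A) with B in H1 by ring.
      replace (0 * B - 1 * A) with (- A) in H2 by ring.
      rewrite Rabs_right in H1 by lra. rewrite Rabs_Ropp, Rabs_right in H2 by lra.
      assert (d <= B) by (apply H1; lra). assert (d <= A) by (apply H2; lra).
      repeat split; lra.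
    - destruct IH as (n1 & m1 & n2 & m2 & Hu & Hv & Hs).
      set (u := INR n1 * B - INR m1 * A) in *.
      set (v := INR m2 * A - INR n2 * B) in *.
      assert (E : INR (n1 + n2) * B - INR (m1 + m2) * A = u - v)
        by (unfold u, v; rewrite !plus_INR; ring).
      rewrite S_INR.
      destruct (Rtotal_order u v) as [Hlt|[Heq|Hgt]].
      + exists n1, m1, (n1 + n2)%nat, (m1 + m2)%nat.
        assert (Hdd : d <= Rabs (INR (n1 + n2) * B - INR (m1 + m2) * A)) by (apply H; lra).
        rewrite E, Rabs_left in Hdd by lra.
        assert (E2 : INR (m1 + m2) * A - INR (n1 + n2) * B = v - u) by lra.
        rewrite E2. fold u. repeat split; lra.
      + exfalso. assert (Hz : INR (n1 + n2) * B - INR (m1 + m2) * A = 0) by lra.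
        destruct (Hirr _ _ Hz) as [Hn Hm].
        assert (n1 = 0%nat) by lia. assert (m1 = 0%nat) by lia. subst n1 m1.
        unfold u in Hu. simpl in Hu. lra.
      + exists (n1 + n2)%nat, (m1 + m2)%nat, n2, m2.
        assert (Hdd : d <= Rabs (INR (n1 + n2) * B - INR (m1 + m2) * A)) by (apply H; lra).
        rewrite E, Rabs_right in Hdd by lra.
        rewrite E. fold v. repeat split; lra. }
  destruct (arch_nat d (A + B) Hd) as [K HK].
  destruct (Claim K) as (n1 & m1 & n2 & m2 & Hu & Hv & Hs). lra.
Qed.

Lemma target (A B c : R) : 0 < A -> 0 < B ->
  (forall n m : nat, INR n * B - INR m * A = 0 -> n = 0%nat /\ m = 0%nat) ->
  forall d, 0 < d -> exists M N : nat,
    0 < Rabs (c - INR M * A + (INR N + 1) * B) < d.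
Proof.
  intros HA HB Hirr d Hd.
  destruct (small_elem A B HA HB Hirr d Hd) as (n & m & Hnm).
  set (e := INR n * B - INR m * A) in *.
  destruct (Rlt_le_dec 0 e) as [Hpos|Hneg].
  - rewrite Rabs_right in Hnm by lra.
    destruct (arch_nat A (c + B) HA) as [K HK].
    destruct (crossing (c + B - INR K * A) e Hpos ltac:(lra)) as [j Hj].
    exists (K + j * m)%nat, (j * n)%nat.
    replace (c - INR (K + j * m) * A + (INR (j * n) + 1) * B)
      with (c + B - INR K * A + INR j * e) by (unfold e; rewrite plus_INR, !mult_INR; ring).
    rewrite Rabs_right by lra. lra.
  - assert (e < 0) by (destruct (Rle_lt_or_eq_dec _ _ Hneg) as [h|h]; [exact h|]; rewrite h, Rabs_R0 in Hnm; lra).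
    rewrite Rabs_left in Hnm by lra.
    destruct (arch_nat B (- c - B) HB) as [K HK].
    destruct (crossing (- (c + (INR K + 1) * B)) (- e) ltac:(lra) ltac:(lra)) as [j Hj].
    exists (j * m)%nat, (K + j * n)%nat.
    replace (c - INR (j * m) * A + (INR (K + j * n) + 1) * B)
      with (c + (INR K + 1) * B + INR j * e) by (unfold e; rewrite plus_INR, !mult_INR; ring).
    rewrite Rabs_left by lra. lra.
Qed.

Fixpoint pw (s : sim) (k : nat) (t : sim) : sim :=
  match k with O => t | S k => sim_comp s (pw s k t) end.

Lemma pw_in S s k t : In s S -> in_semigroup S t -> in_semigroup S (pw s k t).
Proof. intros Hs Ht; induction k; simpl; [exact Ht| apply sg_step; assumption]. Qed.

Lemma pw1 p l b k : pw (p, 0) k (l, b) = (p ^ k * l, p ^ k * b).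
Proof. induction k; simpl; [f_equal; ring|]. rewrite IHk. unfold sim_comp; simpl. f_equal; ring. Qed.

Lemma pw6 r a k : pw (r, 1 - r) k (r, a) = (r ^ (S k), 1 - r ^ k * (1 - a)).
Proof. induction k; simpl; [f_equal; ring|]. rewrite IHk. unfold sim_comp; simpl. f_equal; ring. Qed.

Theorem lemma1 : forall p q r : R,
  0 < p < 1 / 36 -> 0 < q < 1 / 36 -> 0 < r < 1 / 36 ->
  ~ (exists x : Q, ln p / ln r = Q2R x) ->
  ~ WSP (S_pqr p q r).
Proof.
  intros p q r Hp Hq Hr Hx HW. apply HW. clear HW.
  intros eps Heps.
  assert (Hlp : ln p < 0) by (rewrite <- ln_1; apply ln_increasing; lra).
  assert (Hlr : ln r < 0) by (rewrite <- ln_1; apply ln_increasing; lra).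
  set (A := - ln p). set (B := - ln r).
  assert (Hirr : forall n m : nat, INR n * B - INR m * A = 0 -> n = 0%nat /\ m = 0%nat).
  { intros n m Hz.
    destruct (Nat.eq_dec n 0) as [Hn|Hn].
    - subst n. split; [reflexivity|]. simpl in Hz.
      assert (INR m = 0) by (unfold A in Hz; nra).
      apply INR_eq. simpl. exact H.
    - exfalso.
      assert (HnB : 0 < INR n) by (apply lt_0_INR; lia).
      destruct (Nat.eq_dec m 0) as [Hm|Hm].
      { subst m. simpl in Hz. unfold B in Hz. nra. }
      assert (HmA : 0 < INR m) by (apply lt_0_INR; lia).
      apply Hx. exists (Qmake (Z.of_nat n) (Pos.of_nat m)).
      unfold Q2R; simpl.
      assert (Zpos (Pos.of_nat m) = Z.of_nat m) as ->.
      { rewrite <- (Nat2Pos.id m) at 2 by exact Hm. rewrite positive_nat_Z. reflexivity. }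
      rewrite <- !INR_IZR_INZ. unfold A, B in Hz.
      field_simplify_eq; [nra|lra]. }
  set (x0 := (1 - a_const) / r).
  assert (Hx0 : 0 < x0) by (unfold x0, a_const; apply Rdiv_lt_0_compat; lra).
  set (d := Rmin (1/2) (eps / (2 * (1 + x0)))).
  assert (Hd : 0 < d) by (unfold d; apply Rmin_glb_lt; [lra| apply Rdiv_lt_0_compat; lra]).
  assert (Hd1 : d <= 1/2) by apply Rmin_l.
  assert (Hd2 : d <= eps / (2 * (1 + x0))) by apply Rmin_r.
  assert (Hd3 : 2 * d * (1 + x0) <= eps).
  { apply Rmult_le_compat_r with (r := 2 * (1 + x0)) in Hd2; [|lra].
    replace (eps / (2 * (1 + x0)) * (2 * (1 + x0))) with eps in Hd2 by (field; lra). lra. }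
  destruct (target A B (ln q) ltac:(unfold A; lra) ltac:(unfold B; lra) Hirr d Hd) as (M & N & HL).
  set (lam := q * p ^ M / r ^ (S N)).
  assert (Hpm : 0 < p ^ M) by (apply pow_lt; lra).
  assert (Hrn : 0 < r ^ N) by (apply pow_lt; lra).
  assert (Hlam : ln lam = ln q - INR M * A + (INR N + 1) * B).
  { unfold lam, Rdiv. assert (0 < r ^ S N) by (simpl; nra).
    rewrite ln_mult, ln_mult, ln_Rinv, !ln_pow, S_INR;
      try (unfold A, B; ring); try lra; try nra; try (apply Rinv_0_lt_compat; lra). }
  set (L := ln lam) in *.
  assert (HlamE : lam = exp L) by (unfold L; rewrite exp_ln; [reflexivity|unfold lam; simpl; apply Rdiv_lt_0_compat; nra]).
  assert (HLd : - d < L < d /\ L <> 0).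
  { rewrite <- Hlam in HL. destruct (Rabs_def2 L d ltac:(lra)). split; [lra|]. intro h. rewrite h, Rabs_R0 in HL. lra. }
  assert (Hb1 : 1 + L <= exp L) by apply exp_ineq1_le.
  assert (Hb2 : 1 - L <= exp (- L)) by (pose proof (exp_ineq1_le (- L)); lra).
  assert (Hprod : exp L * exp (- L) = 1) by (rewrite <- exp_plus; replace (L + - L) with 0 by ring; apply exp_0).
  assert (Hclose : Rabs (lam - 1) < 2 * d).
  { rewrite HlamE. apply Rabs_def1.
    - assert (exp L * (1 - L) <= exp L * exp (- L)) by (apply Rmult_le_compat_l; [left; apply exp_pos| exact Hb2]).
      rewrite Hprod in H.
      nra.
    - lra. }
  assert (Hneq : lam <> 1).
  { intro h. apply (proj2 HLd). unfold L. rewrite h. apply ln_1. }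
  exists (sim_comp (sim_inv (sim_comp (r, h_const - r) (pw (r, 1 - r) N (r, a_const))))
                   (sim_comp (- q, h_const) (pw (p, 0) M (- r, 1 - a_const)))).
  assert (Hin : forall s, In s ((p, 0) :: (r, a_const) :: (- q, h_const) :: (r, h_const - r)
       :: (- r, 1 - a_const) :: (r, 1 - r) :: nil) -> In s (S_pqr p q r)) by (intros; assumption).
  rewrite pw1, pw6.
  assert (Hfst : fst (sim_comp (sim_inv (sim_comp (r, h_const - r) (r ^ S N, 1 - r ^ N * (1 - a_const))))
        (sim_comp (- q, h_const) (p ^ M * - r, p ^ M * (1 - a_const)))) = lam).
  { unfold sim_comp, sim_inv, lam; simpl. field. split; lra. }
  assert (Hsnd : snd (sim_comp (sim_inv (sim_comp (r, h_const - r) (r ^ S N, 1 - r ^ N * (1 - a_const))))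
        (sim_comp (- q, h_const) (p ^ M * - r, p ^ M * (1 - a_const)))) = x0 * (1 - lam)).
  { unfold sim_comp, sim_inv, lam, x0; simpl. field. split; lra. }
  split; [|split; [|split]].
  - rewrite <- pw1, <- pw6.
    exists (sim_comp (- q, h_const) (pw (p, 0) M (- r, 1 - a_const))),
           (sim_comp (r, h_const - r) (pw (r, 1 - r) N (r, a_const))).
    split; [|split; [|reflexivity]].
    + apply sg_step; [simpl; tauto|]. apply pw_in; [simpl; tauto|]. apply sg_base. simpl; tauto.
    + apply sg_step; [simpl; tauto|]. apply pw_in; [simpl; tauto|]. apply sg_base. simpl; tauto.
  - intro h. apply Hneq. rewrite <- Hfst, h. reflexivity.
  - rewrite Hfst. nra.
  - rewrite Hsnd, Rabs_mult, Rabs_right by lra. rewrite Rabs_minus_sym.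
    assert (x0 * Rabs (lam - 1) <= x0 * (2 * d)) by (apply Rmult_le_compat_l; lra).
    nra.
Qed.
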